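(* Let $n,m,k,r$ be positive integers. Then \[S_{\leq m}(n,k,r)=\sum_{i=0}^{m-1}\binom{n-1}{i}\Big((k-1)\,S_{\leq m}(n-i-1,k-1,r)+S_{\leq m}(n-i-1,k,r-1)\Big),\] where summands with $i>n-1$ (for which $\binom{n-1}{i}=0$) are $0$, and when $k=1$ the term $(k-1)S_{\leq m}(n-i-1,k-1,r)$ is $0$.
   Context: For integers $N\ge 0$, $k\ge1$, $r\ge 0$, $m\ge1$, $S_{\leq m}(N,k,r)$ is the number of ways to partition $[N]=\{1,\dots,N\}$ into $r+k-1$ non-empty blocks, each of size at most $m$, where $r$ of the blocks receive the label $1$ (blocks with label $1$ are indistinguishable among themselves) and the remaining $k-1$ blocks receive the distinct labels $2,3,\dots,k$. (In particular $S_{\leq m}(0,1,0)=1$.) *)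

(* Defs.v *)
From mathcomp Require Import all_boot.
Unset Printing Implicit Defensive.

(* A labelled bounded partition of [N] = 'I_N with parameters k, r, m is a pair
   (P, g) where P is a set partition of 'I_N into r + (k-1) nonempty blocks, each
   of size at most m, and g : 'I_(k-1) -> blocks is an injective assignment of
   the distinct labels 2..k (label j+2 given to block g j); the remaining r
   blocks receive the (indistinguishable) label 1. *)
Definition labelled_bpart (m N k r : nat)
  (x : {set {set 'I_N}} * {ffun 'I_(k.-1) -> {set 'I_N}}) : bool :=
  let P := x.1 in let g := x.2 in
  [&& partition P [set: 'I_N],
      [forall B in P, #|B| <= m],
      #|P| == r + k.-1,
      injectiveb g &
      [forall j, g j \in P]].

Definition Sm (m N k r : nat) : nat := #|[pred x | @labelled_bpart m N k r x]|.

(* Main.v *)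
Require Import Defs.
From mathcomp Require Import all_boot zify.

Definition lab (T : finType) (m : nat) (D : {set T}) (K t : nat)
  (x : {set {set T}} * {ffun 'I_K -> {set T}}) : bool :=
  [&& partition x.1 D, [forall B in x.1, #|B| <= m], #|x.1| == t,
      injectiveb x.2 & [forall j, x.2 j \in x.1]].

Definition cnt (T : finType) (m : nat) (D : {set T}) (K t : nat) : nat :=
  #|[pred x | @lab T m D K t x]|.

Lemma card_bij (X Y : finType) (A : {pred X}) (B : {pred Y}) (f : X -> Y) (g : Y -> X) :
  (forall x, x \in A -> f x \in B) -> (forall y, y \in B -> g y \in A) ->
  (forall x, x \in A -> g (f x) = x) -> (forall y, y \in B -> f (g y) = y) ->
  #|A| = #|B|.
Proof.
move=> fAB gBA gf fg; apply/eqP; rewrite eqn_leq; apply/andP; split.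
  rewrite -(@card_in_imset _ _ f A); last first.
    by move=> x y xA yA e; rewrite -(gf x xA) -(gf y yA) e.
  apply: subset_leq_card; apply/subsetP => y /imsetP [x xA ->]; exact: fAB.
rewrite -(@card_in_imset _ _ g B); last first.
  by move=> x y xA yA e; rewrite -(fg x xA) -(fg y yA) e.
apply: subset_leq_card; apply/subsetP => y /imsetP [x xA ->]; exact: gBA.
Qed.

Lemma cover_D1 (T : finType) (P : {set {set T}}) B :
  trivIset P -> B \in P -> cover (P :\ B) = cover P :\: B.
Proof.
move=> tP BP; apply/setP => y; rewrite inE; apply/bigcupP/andP.
  case=> C; rewrite !inE => /andP[CB CP] yC; split.
    apply/negP => yB; apply: (negP CB); apply/eqP.
    by rewrite -(def_pblock tP CP yC) (def_pblock tP BP yB).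
  by apply/bigcupP; exists C.
move=> [yB /bigcupP [C CP yC]]; exists C => //.
rewrite !inE CP andbT; apply/eqP => CB; subst; by rewrite yC in yB.
Qed.

Lemma part_D1 (T : finType) (P : {set {set T}}) D B :
  partition P D -> B \in P -> partition (P :\ B) (D :\: B).
Proof.
case/and3P => /eqP cP tP s0 BP.
rewrite /partition cover_D1 // cP eqxx /= (trivIsetS _ tP) ?subsetDl //.
by rewrite inE negb_and s0 orbT.
Qed.

Lemma part_U1 (T : finType) (P : {set {set T}}) D B :
  partition P (D :\: B) -> B \subset D -> B != set0 ->
  partition (B |: P) D /\ B \notin P.
Proof.
case/and3P => /eqP cP tP s0 BD Bn0.
have dis : {in P, forall C : {set T}, [disjoint B & C]}.
  move=> C CP; rewrite disjoint_sym disjoint_subset; apply/subsetP => y yC.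
  have : y \in cover P by apply/bigcupP; exists C.
  by rewrite cP !inE => /andP[].
have [tU BnP] := trivIsetU1 dis tP s0; split => //.
rewrite /partition tU /= !inE negb_or (eq_sym set0) Bn0 s0 andbT.
rewrite /cover bigcup_setU big_set1 -/(cover P) cP.
rewrite andbT; apply/eqP; apply/setP => y; rewrite !inE.
by case: (boolP (y \in B)) => //= yB; rewrite (subsetP BD).
Qed.
Arguments cnt {T}.
Arguments lab {T}.
Arguments part_U1 {T P D B}.
Arguments part_D1 {T P D B}.
Arguments cover_D1 {T P B}.

Lemma cnt_decomp (T : finType) m (D : {set T}) K t x0 : x0 \in D ->
  cnt m D K t.+1 = \sum_(B : {set T} | [&& x0 \in B, B \subset D & #|B| <= m])
     (K * cnt m (D :\: B) K.-1 t + cnt m (D :\: B) K t).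
Proof.
move=> x0D.
rewrite /cnt -sum1_card.
rewrite (partition_big (fun x => pblock x.1 x0)
          (fun B => [&& x0 \in B, B \subset D & #|B| <= m])); last first.
  move=> [P g]; rewrite inE /lab /= => /and5P [pP szP _ _ _].
  have cP : cover P = D by case/and3P: pP => /eqP.
  have x0c : x0 \in cover P by rewrite cP.
  rewrite mem_pblock x0c /=; apply/andP; split.
    rewrite -cP; apply/subsetP => y yB; apply/bigcupP.
    by exists (pblock P x0) => //; exact: pblock_mem.
  exact: (forall_inP szP _ (pblock_mem x0c)).
apply: eq_bigr => B /and3P [x0B BD Bm].
have Bn0 : B != set0 by apply/set0Pn; exists x0.
rewrite (bigID (fun x : {set {set T}} * {ffun 'I_K -> {set T}} => [exists j, x.2 j == B])) /=.
congr (_ + _); rewrite sum1dep_card.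
  case: K => [|K'].
    rewrite mul0n; apply/eqP; rewrite cards_eq0; apply/eqP/setP => x; rewrite !inE.
    by case: existsP => [[[j jlt] _]|]; rewrite ?andbF.
  have -> : K'.+1 * cnt m (D :\: B) K'.+1.-1 t =
      #|[predX 'I_K'.+1 & [pred y | lab m (D :\: B) K' t y]]| by rewrite cardX card_ord.
  pose jf (x : {set {set T}} * {ffun 'I_K'.+1 -> {set T}}) := odflt ord0 [pick j | x.2 j == B].
  pose hf (j : 'I_K'.+1) (g' : {ffun 'I_K' -> {set T}}) : {ffun 'I_K'.+1 -> {set T}} :=
     [ffun i => if unlift j i is Some i' then g' i' else B].
  apply: (@card_bij _ _ _ _
     (fun x => (jf x, (x.1 :\ B, [ffun i : 'I_K' => x.2 (lift (jf x) i)])))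
     (fun p => (B |: p.2.1, hf p.1 p.2.2))).
  - move=> [P g]; rewrite !inE /lab /= => /andP[/andP[/and5P[pP szP cP ig gP] /eqP pb] ex].
    have x0c : x0 \in cover P by case/and3P: pP => /eqP ->.
    have BP : B \in P by rewrite -pb pblock_mem.
    have gj : g (jf (P, g)) = B.
      rewrite /jf /=; case: pickP => [j' /eqP //|none].
      by case/existsP: ex => j' e; rewrite none in e.
    move: gj; set j := jf (P, g) => gj.
    rewrite part_D1 //=.
    rewrite (cardsD1 B P) BP add1n eqSS in cP; rewrite cP /=.
    apply/and3P; split.
    + apply/forall_inP => C; rewrite inE => /andP[_ CP]; exact: (forall_inP szP).
    + apply/injectiveP => i1 i2; rewrite !ffunE => /(injectiveP _ ig)/lift_inj //.
    + apply/forallP => i; rewrite ffunE !inE (forallP gP) andbT.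
      apply/eqP => e; have := neq_lift j i.
      by rewrite (injectiveP _ ig _ _ (etrans e (esym gj))) eqxx.
  - move=> [j [P g']]; rewrite !inE /lab /= => /and5P[pP szP cP ig gP].
    have [pU BnP] := part_U1 pP BD Bn0.
    have tU : trivIset (B |: P) by case/and3P: pU.
    have hj : hf j g' j = B by rewrite ffunE unlift_none.
    have hl : forall i', hf j g' (lift j i') = g' i' by move=> i'; rewrite ffunE liftK.
    rewrite pU cardsU1 BnP (eqP cP) (def_pblock tU (setU11 B P) x0B) eqxx /=.
    rewrite add1n eqxx /= andbT.
    apply/andP; split; first (apply/and3P; split).
    + apply/forall_inP => C; rewrite !inE => /orP[/eqP -> // | CP]; exact: (forall_inP szP).
    + apply/injectiveP => i1 i2.
      case: (unliftP j i1) => [i1' ->|->]; case: (unliftP j i2) => [i2' ->|->];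
        rewrite ?hl ?hj //.
      * by move/(injectiveP _ ig) ->.
      * by move=> e; move: (forallP gP i1'); rewrite e (negbTE BnP).
      * by move=> e; move: (forallP gP i2'); rewrite -e (negbTE BnP).
    + apply/forallP => i; case: (unliftP j i) => [i' ->|->]; rewrite ?hl ?hj.
        by rewrite !inE (forallP gP) orbT.
      exact: setU11.
    + by apply/existsP; exists j; rewrite hj.
  - move=> [P g]; rewrite !inE /lab /= => /andP[/andP[/and5P[pP szP cP ig gP] /eqP pb] ex].
    have x0c : x0 \in cover P by case/and3P: pP => /eqP ->.
    have BP : B \in P by rewrite -pb pblock_mem.
    have gj : g (jf (P, g)) = B.
      rewrite /jf /=; case: pickP => [j' /eqP //|none].
      by case/existsP: ex => j' e; rewrite none in e.
    move: gj; rewrite /=; set j := jf (P, g) => gj.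
    rewrite setD1K //; congr (_, _); apply/ffunP => i; rewrite ffunE.
    by case: (unliftP j i) => [i' ->|->]; rewrite ?liftK ?unlift_none ?ffunE.
  - move=> [j [P g']]; rewrite !inE /lab /= => /and5P[pP szP cP ig gP].
    have [pU BnP] := part_U1 pP BD Bn0.
    have hj : hf j g' j = B by rewrite ffunE unlift_none.
    have hl : forall i', hf j g' (lift j i') = g' i' by move=> i'; rewrite ffunE liftK.
    have -> : jf (B |: P, hf j g') = j.
      rewrite /jf /=; case: pickP => [i | none]; last by move: (none j); rewrite hj eqxx.
      case: (unliftP j i) => [i' ->|-> //]; rewrite hl => /eqP e.
      by move: (forallP gP i'); rewrite e (negbTE BnP).
    rewrite setU1K //; congr (_, (_, _)); apply/ffunP => i; by rewrite ffunE hl.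
apply: (@card_bij _ _ _ _ (fun x => (x.1 :\ B, x.2)) (fun y => (B |: y.1, y.2))).
- move=> [P g]; rewrite !inE /lab /= => /andP[/andP[/and5P[pP szP cP ig gP] /eqP pb] nex].
  have x0c : x0 \in cover P by case/and3P: pP => /eqP ->.
  have BP : B \in P by rewrite -pb pblock_mem.
  rewrite part_D1 // ig /=.
  rewrite (cardsD1 B P) BP add1n eqSS in cP; rewrite cP /=.
  apply/andP; split.
    apply/forall_inP => C; rewrite inE => /andP[_ CP]; exact: (forall_inP szP).
  apply/forallP => j; rewrite !inE (forallP gP j) andbT.
  apply/eqP => e; apply: (negP nex); apply/existsP; exists j; by rewrite e.
- move=> [P g]; rewrite !inE /lab /= => /and5P[pP szP cP ig gP].
  have [pU BnP] := part_U1 pP BD Bn0.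
  have tU : trivIset (B |: P) by case/and3P: pU.
  rewrite pU ig cardsU1 BnP (eqP cP) (def_pblock tU (setU11 B P) x0B) eqxx /=.
  rewrite add1n eqxx /= andbT.
  apply/andP; split; first (apply/andP; split).
  + apply/forall_inP => C; rewrite !inE => /orP[/eqP -> // | CP]; exact: (forall_inP szP).
  + by apply/forallP => j; rewrite !inE (forallP gP j) orbT.
  + apply/existsP => [[j /eqP e]]; move: (forallP gP j); by rewrite e (negbTE BnP).
- move=> [P g]; rewrite !inE /lab /= => /andP[/andP[/and5P[pP szP cP ig gP] /eqP pb] nex].
  have x0c : x0 \in cover P by case/and3P: pP => /eqP ->.
  have BP : B \in P by rewrite -pb pblock_mem.
  by rewrite setD1K.
- move=> [P g]; rewrite !inE /lab /= => /and5P[pP szP cP ig gP].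
  have [pU BnP] := part_U1 pP BD Bn0.
  by rewrite setU1K.
Qed.

Lemma sum_const_dep (X : finType) (P : pred X) c :
  \sum_(x | P x) c = #|[set x | P x]| * c.
Proof. by rewrite -sum1dep_card big_distrl /=; apply: eq_bigr => ? _; rewrite mul1n. Qed.

Lemma inord_card (T : finType) m' (B : {set T}) (i : 'I_m'.+1) :
  0 < #|B| -> #|B| <= m'.+1 -> (inord (#|B|.-1) == i) = (#|B| == i.+1).
Proof.
move=> B0 Bm; apply/eqP/eqP => [<-|->]; last by rewrite /= inord_val.
by rewrite inordK ?prednK // prednK.
Qed.

Lemma group_sum (T : finType) m' (D : {set T}) x0 (h : nat -> nat) : x0 \in D ->
  \sum_(B : {set T} | [&& x0 \in B, B \subset D & #|B| <= m'.+1]) h #|B| =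
  \sum_(i < m'.+1) 'C(#|D|.-1, i) * h i.+1.
Proof.
move=> x0D.
rewrite (partition_big (fun B : {set T} => (inord (#|B|.-1) : 'I_m'.+1)) predT) //=.
apply: eq_bigr => i _.
have B0 : forall B : {set T}, x0 \in B -> 0 < #|B| by move=> B xB; rewrite card_gt0; apply/set0Pn; exists x0.
rewrite (eq_bigr (fun _ => h i.+1)); last first.
  move=> B /andP[/and3P[x0B BD Bm]]; rewrite inord_card ?B0 // => /eqP -> //.
rewrite sum_const_dep; congr (_ * _).
have -> : 'C(#|D|.-1, i) = #|[set B' : {set T} | B' \subset D :\ x0 & #|B'| == i]|.
  by rewrite cards_draws (cardsD1 x0 D) x0D.
apply: (@card_bij _ _ _ _ (fun B => B :\ x0) (fun B' => x0 |: B')).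
- move=> B; rewrite !inE => /andP[/and3P[x0B BD Bm]]; rewrite inord_card ?B0 // => /eqP e.
  rewrite setSD //=; move: e; rewrite (cardsD1 x0 B) x0B add1n => -[->] //.
- move=> B'; rewrite !inE => /andP[sB /eqP e].
  have x0nB : x0 \notin B' by apply/negP => /(subsetP sB); rewrite !inE eqxx.
  have cB : #|x0 |: B'| = i.+1 by rewrite cardsU1 x0nB e.
  rewrite eqxx cB ltn_ord /= inord_val eqxx !andbT.
  apply/subsetP => y; rewrite !inE => /orP[/eqP -> // | yB].
  by move: (subsetP sB y yB); rewrite !inE => /andP[].
- by move=> B; rewrite !inE => /andP[/and3P[x0B _ _] _]; rewrite setD1K.
- move=> B'; rewrite !inE => /andP[sB _].
  have x0nB : x0 \notin B' by apply/negP => /(subsetP sB); rewrite !inE eqxx.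
  by rewrite setU1K.
Qed.

Lemma cnt_t0 (T : finType) m (D : {set T}) K : D != set0 -> cnt m D K 0 = 0.
Proof.
case/set0Pn => x xD; apply: eq_card0 => [[P g]]; rewrite !inE /lab /=.
apply/negP => /and5P[pP _ cP _ _]; move: cP; rewrite cards_eq0 => /eqP P0.
case/and3P: pP; rewrite P0 /cover big_set0 => /eqP D0.
by rewrite -D0 inE in xD.
Qed.

Lemma cnt_empty (T : finType) m K t : cnt m (set0 : {set T}) K t = ((K == 0) && (t == 0)).
Proof.
have P0 : forall P : {set {set T}}, partition P set0 -> P = set0.
  move=> P /and3P[/eqP cP _ s0]; apply/setP => C; rewrite inE; apply/negbTE/negP => CP.
  have : C \subset cover P by apply/subsetP => y yC; apply/bigcupP; exists C.
  rewrite cP subset0 => /eqP C0; by rewrite -C0 CP in s0.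
case: K => [|K] /=; last first.
  apply: eq_card0 => [[P g]]; rewrite !inE /lab /=; apply/negP => /and5P[pP _ _ _ gP].
  by move: (forallP gP ord0); rewrite (P0 _ pP) inE.
case: t => [|t] /=; last first.
  apply: eq_card0 => [[P g]]; rewrite !inE /lab /=; apply/negP => /and5P[pP _ cP _ _].
  by move: cP; rewrite (P0 _ pP) cards0.
rewrite -(card1 ((set0, [ffun i => set0]) : {set {set T}} * {ffun 'I_0 -> {set T}})).
apply: eq_card => [[P g]]; rewrite !inE /lab /=.
apply/idP/idP.
  move=> /and5P[pP _ _ _ _]; rewrite (P0 _ pP) xpair_eqE eqxx /=.
  by apply/eqP/ffunP => -[].
move/eqP => [-> ->].
rewrite /partition /trivIset /cover !big_set0 eqxx cards0 in_set0 /=.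
repeat (apply/andP; split);
  try (by apply/forall_inP => B; rewrite in_set0);
  try (by apply/injectiveP => -[]); try (by apply/forallP => -[]); by rewrite cards0.
Qed.

Lemma cnt_inv m' N : forall n, n <= N -> forall (T : finType) (D : {set T}), #|D| = n ->
  forall K t, cnt m'.+1 D K t = cnt m'.+1 [set: 'I_n] K t.
Proof.
elim: N => [|N IH] n.
  rewrite leqn0 => /eqP -> T D /eqP; rewrite cards_eq0 => /eqP -> K t.
  have -> : [set: 'I_0] = set0 by apply/setP => -[].
  by rewrite !cnt_empty.
move=> nN T D cD K t.
case: n nN cD => [|n] nN cD; first exact: IH.
have : 0 < #|D| by rewrite cD.
rewrite card_gt0 => /set0Pn [x0 x0D].
case: t => [|t].
  rewrite !cnt_t0 //; first by apply/set0Pn; exists ord0.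
  by apply/set0Pn; exists x0.
have key : forall (T' : finType) (D' : {set T'}) y0, y0 \in D' -> #|D'| = n.+1 ->
   cnt m'.+1 D' K t.+1 = \sum_(i < m'.+1) 'C(n, i) *
      (K * cnt m'.+1 [set: 'I_(n - i)] K.-1 t + cnt m'.+1 [set: 'I_(n - i)] K t).
  move=> T' D' y0 y0D cD'; rewrite (cnt_decomp _ _ _ _ _ _ y0D).
  rewrite (eq_bigr (fun B : {set T'} => (fun s => K * cnt m'.+1 [set: 'I_(n.+1 - s)] K.-1 t
                 + cnt m'.+1 [set: 'I_(n.+1 - s)] K t) #|B|)).
    rewrite (group_sum T' m' D' y0 (fun s => K * cnt m'.+1 [set: 'I_(n.+1 - s)] K.-1 t + cnt m'.+1 [set: 'I_(n.+1 - s)] K t) y0D).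
    by rewrite cD' /=; apply: eq_bigr => i _; rewrite subSS.
  move=> B /and3P[y0B BD _].
  have B0 : 0 < #|B| by rewrite card_gt0; apply/set0Pn; exists y0.
  have cDB : #|D' :\: B| = n.+1 - #|B|.
    by rewrite cardsD (setIidPr BD) cD'.
  rewrite !(IH (n.+1 - #|B|)) // ?cardsT ?card_ord //; lia.
rewrite (key _ _ _ x0D cD) (key _ _ ord0) ?in_setT //.
by rewrite cardsT card_ord.
Qed.

Lemma cnt_rec m' n K t : cnt m'.+1 [set: 'I_n.+1] K t.+1 =
  \sum_(i < m'.+1) 'C(n, i) *
      (K * cnt m'.+1 [set: 'I_(n - i)] K.-1 t + cnt m'.+1 [set: 'I_(n - i)] K t).
Proof.
rewrite (cnt_decomp _ _ _ _ _ _ (in_setT (ord0 : 'I_n.+1))).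
rewrite (eq_bigr (fun B : {set 'I_n.+1} => (fun s => K * cnt m'.+1 [set: 'I_(n.+1 - s)] K.-1 t
                 + cnt m'.+1 [set: 'I_(n.+1 - s)] K t) #|B|)).
  rewrite (group_sum _ m' _ _ (fun s => K * cnt m'.+1 [set: 'I_(n.+1 - s)] K.-1 t + cnt m'.+1 [set: 'I_(n.+1 - s)] K t) (in_setT (ord0 : 'I_n.+1))).
  by rewrite cardsT card_ord /=; apply: eq_bigr => i _; rewrite subSS.
move=> B /and3P[_ BD _].
have cDB : #|[set: 'I_n.+1] :\: B| = n.+1 - #|B|.
  by rewrite cardsD (setIidPr BD) cardsT card_ord.
by rewrite !(cnt_inv m' (n.+1 - #|B|) (n.+1 - #|B|) (leqnn _) _ _ cDB).
Qed.

Theorem mainTheorem3 (n m k r : nat) :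
  0 < n -> 0 < m -> 0 < k -> 0 < r ->
  Sm m n k r =
  \sum_(i < m) 'C(n - 1, i) *
     ((k - 1) * Sm m (n - i - 1) (k - 1) r + Sm m (n - i - 1) k (r - 1)).
Proof.
case: n => // n _; case: m => // m' _; case: k => // k _; case: r => // r _.
have E : forall N k r, Sm m'.+1 N k r = cnt m'.+1 [set: 'I_N] k.-1 (r + k.-1) by [].
rewrite E /= addSn cnt_rec; apply: eq_bigr => i _.
rewrite !E (_ : n.+1 - i - 1 = n - i); last by lia.
rewrite !subn1 /=.
case: k => [|k]; first by rewrite !mul0n.
by rewrite /= addSn addnS.
Qed.
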